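(* For a word $w=w_1\cdots w_n$ over $\{1,2,3,4\}$ let $r(w)=|\{i: w_{i+1}-w_i=2,\ w_{i+1}\text{ odd}\}|+|\{i: w_{i+2}-w_i=2,\ w_{i+2}\text{ odd}\}|$ (the number of occurrences of the place-difference-value pattern $(12,(\mathbb{P},\{1,2\},\mathbb{P}),\{(1,2,\{2\})\},(\mathbb{O},\mathbb{P}))$, i.e. pairs of odd letters at distance $1$ or $2$ whose later letter exceeds the earlier one by exactly $2$). Then $$\sum_{w\in\{1,2,3,4\}^*}q^{|w|}z^{r(w)}=\frac{1}{1-4q-(z-1)q^2-2(z^2-1)q^3-z(z-1)^2q^4}.$$
   Context: The sum ranges over all finite words over $\{1,2,3,4\}$, including the empty word; $|w|$ denotes length; $\mathbb{O}$ is the set of odd numbers. *)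

(* Defs.v *)
From mathcomp Require Import all_boot all_order all_algebra.
Set Implicit Arguments. Unset Strict Implicit. Unset Printing Implicit Defensive.
Import GRing.Theory.
Local Open Scope ring_scope.

Definition rstat (w : seq nat) : nat :=
  (count (fun i => (nth 0%N w i.+1 == nth 0%N w i + 2)%N && odd (nth 0%N w i.+1))
         (iota 0 (size w - 1)) +
   count (fun i => (nth 0%N w i.+2 == nth 0%N w i + 2)%N && odd (nth 0%N w i.+2))
         (iota 0 (size w - 2)))%N.

Definition word_of (n : nat) (t : n.-tuple 'I_4) : seq nat :=
  [seq (val j).+1 | j <- t].

(* Coefficient of q^n in the generating function: a polynomial in z. *)
Definition Fcoef (n : nat) : {poly int} :=
  \sum_(t : n.-tuple 'I_4) 'X^(rstat (word_of t)).

(* The denominator 1-4q-(z-1)q^2-2(z^2-1)q^3-z(z-1)^2 q^4 as a polynomial in q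
   with coefficients in Z[z]. *)
Definition zvar : {poly int} := 'X.
Definition Denom : {poly {poly int}} :=
  1 - (4%:R : {poly int})%:P * 'X
    - (zvar - 1)%:P * 'X^2
    - (2%:R * (zvar ^+ 2 - 1))%:P * 'X^3
    - (zvar * (zvar - 1) ^+ 2)%:P * 'X^4.

(* Main.v *)
Require Import Defs.
From mathcomp Require Import all_boot all_order all_algebra.
From mathcomp Require Import ring zify.
Import GRing.Theory.
Local Open Scope ring_scope.

Definition Sg (n : nat) (g : seq nat -> {poly int}) : {poly int} :=
  \sum_(t : n.-tuple 'I_4) g (word_of t).

Lemma Sg_cons n g :
  Sg n.+1 g = \sum_(c : 'I_4) Sg n (fun w => g ((val c).+1 :: w)).
Proof.
rewrite /Sg pair_big /=.
rewrite (reindex (fun p : 'I_4 * n.-tuple 'I_4 => [tuple of p.1 :: p.2])) /=.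
  by apply: eq_bigr => -[c t] _.
exists (fun t : n.+1.-tuple 'I_4 => (thead t, [tuple of behead t])).
  by move=> [c t] _ /=; congr pair; apply: val_inj.
move=> t _ /=; apply: val_inj => /=.
by case: t => -[|x s] //=.
Qed.

Local Open Scope nat_scope.
Lemma count_iotaS (p : pred nat) m k :
  count p (iota m.+1 k) = count (fun i => p i.+1) (iota m k).
Proof. by elim: k m => [|k IH] m //=; rewrite IH. Qed.

Lemma rstat_cons c w : rstat (c :: w) = (rstat w +
   ((nth 0 w 0 == c + 2) && odd (nth 0 w 0)) +
   ((nth 0 w 1 == c + 2) && odd (nth 0 w 1)))%N.
Proof.
case: w => [|x [|y w]].
- by rewrite /rstat /= !andbF.
- by rewrite /rstat /= !andbF !addn0.
- rewrite /rstat /= !subSS subn0 !count_iotaS /=.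
  lia.
Qed.

Lemma nth_word_le n (t : n.-tuple 'I_4) i : nth 0 (word_of t) i <= 4.
Proof.
rewrite /word_of; case: (ltnP i (size t)) => h.
  by rewrite (nth_map ord0) //; exact: ltn_ord.
by rewrite nth_default // size_map.
Qed.

Lemma key x c : x <= 4 -> c < 4 -> ((x == c.+1 + 2) && odd x) = (c == 0) && (x == 3).
Proof. by case: x => [|[|[|[|[|x]]]]] //=; case: c => [|[|[|[|c]]]]. Qed.

Lemma rstat_word n (t : n.-tuple 'I_4) (c : 'I_4) :
  rstat ((val c).+1 :: word_of t) = rstat (word_of t) +
    ((val c == 0) && (nth 0 (word_of t) 0 == 3)) +
    ((val c == 0) && (nth 0 (word_of t) 1 == 3)).
Proof. by rewrite rstat_cons !key ?nth_word_le ?ltn_ord. Qed.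

Local Open Scope ring_scope.

Definition ind (b x : bool) : {poly int} := (x == b)%:R.
Definition P n (a b : bool) := Sg n (fun w =>
  ind a (nth 0%N w 0%N == 3%N) * ind b (nth 0%N w 1%N == 3%N) * 'X^(rstat w)).

Lemma Sg_cons' n g :
  Sg n.+1 g = Sg n (fun w => \sum_(c < 4) g ((val c).+1 :: w)).
Proof. by rewrite Sg_cons /Sg exchange_big. Qed.

Lemma PT n b : P n.+1 true b = P n b true + P n b false.
Proof.
rewrite /P Sg_cons' /Sg -big_split /=; apply: eq_bigr => t _.
under eq_bigr do rewrite rstat_word.
rewrite !big_ord_recl big_ord0 /=.
move: (nth 0%N (word_of t) 0 == 3%N) (nth 0%N (word_of t) 1 == 3%N) (rstat (word_of t)) => b0 b1 r.
by case: b0; case: b1; case: b; rewrite /ind /= ?exprD; ring.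
Qed.

Lemma PF n b : P n.+1 false b = 2%:R * P n b true + 2%:R * P n b false
   + 'X^(b.+1) * P n b true + 'X^b * P n b false.
Proof.
rewrite /P Sg_cons' /Sg !mulr_sumr -!big_split /=; apply: eq_bigr => t _.
under eq_bigr do rewrite rstat_word.
rewrite !big_ord_recl big_ord0 /=.
move: (nth 0%N (word_of t) 0 == 3%N) (nth 0%N (word_of t) 1 == 3%N) (rstat (word_of t)) => b0 b1 r.
by case: b0; case: b1; case: b; rewrite /ind /= ?exprD; ring.
Qed.

Lemma Fsum n : Fcoef n = P n true true + P n true false + P n false true + P n false false.
Proof.
rewrite /Fcoef /P /Sg -!big_split; apply: eq_bigr => t _ /=.
by case: (nth 0%N (word_of t) 0 == 3%N); case: (nth 0%N (word_of t) 1 == 3%N);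
  rewrite /ind /=; ring.
Qed.

Lemma P0 a b : P 0 a b = (~~ a && ~~ b)%:R.
Proof.
rewrite /P /Sg (eq_bigl (pred1 [tuple])); last by move=> t; apply/esym/eqP; exact: tuple0.
by rewrite big_pred1_eq /=; case: a; case: b; rewrite /ind /=; ring.
Qed.

Lemma DenomE k : Denom`_k =
  if k == 0%N then 1 else if k == 1%N then - 4%:R
  else if k == 2%N then - (zvar - 1)
  else if k == 3%N then - (2%:R * (zvar ^+ 2 - 1))
  else if k == 4%N then - (zvar * (zvar - 1) ^+ 2) else 0.
Proof.
rewrite /Denom !coefB !coefCM !coefXn coef1 coefX.
by case: k => [|[|[|[|[|k]]]]] /=; ring.
Qed.

Theorem mainTheorem9 : forall n : nat,
  \sum_(k < n.+1) Denom`_k * Fcoef (n - k) = (n == 0%N)%:R.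
Proof.
case=> [|[|[|[|m]]]].
- by rewrite big_ord_recl big_ord0 DenomE Fsum !P0 /=; ring.
- rewrite !big_ord_recl big_ord0 !DenomE /= !Fsum !subSS !subn0; do ![rewrite PT | rewrite PF]; rewrite !P0 /zvar /=; ring.
- rewrite !big_ord_recl big_ord0 !DenomE /= !Fsum !subSS !subn0; do ![rewrite PT | rewrite PF]; rewrite !P0 /zvar /=; ring.
- rewrite !big_ord_recl big_ord0 !DenomE /= !Fsum !subSS !subn0; do ![rewrite PT | rewrite PF]; rewrite !P0 /zvar /=; ring.
- rewrite !big_ord_recl big1; last first.
    by move=> i _; rewrite DenomE /= mul0r.
  rewrite !DenomE /= !Fsum !subSS !subn0; do ![rewrite PT | rewrite PF]; rewrite /zvar /=; ring.
Qed.
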